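(* Let $m\ge0$ and let $\beta_m>0$ be a real number such that $c(h)\le\beta_m\|h\|$ for every $h\in\mathbb{R}[y]$ of degree at most $m$. For $i=1,\dots,k$, let $f_i,g_i\in\mathbb{R}[y]$ be of degree $\le m$, and let $f=\sum_{i=1}^kf_i^2$, $g=\sum_{i=1}^kg_i^2$. If $\epsilon\ge0$ is such that $c(g_i-f_i)\le\epsilon$ for $i=1,\dots,k$, then $$c(g-f)\le(m+1)k\epsilon\cdot\bigl(\epsilon+2\beta_m\sqrt{\|f\|}\bigr).$$
   Context: For a polynomial $h=\sum_{i}a_iy^i\in\mathbb{R}[y]$, $c(h)=\max_i|a_i|$ (maximum absolute value of the coefficients) and $\|h\|=\max\{|h(t)|: -1\le t\le 1\}$. *)

(* Defs.v *)
From HB Require Import structures.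
From mathcomp Require Import all_boot all_order all_algebra.
From mathcomp Require Import all_classical all_reals.
Set Implicit Arguments. Unset Strict Implicit. Unset Printing Implicit Defensive.
Import Order.TTheory GRing.Theory Num.Theory.
Local Open Scope ring_scope.
Local Open Scope classical_set_scope.

Definition coefmax (R : realType) (h : {poly R}) : R :=
  \big[Num.max/0]_(i < size h) `|h`_i|.

(* ||h||: max { |h(t)| : -1 <= t <= 1 }, written as a supremum
   (the max exists by continuity and compactness). *)
Definition supnorm (R : realType) (h : {poly R}) : R :=
  sup [set `|h.[t]| | t in [set t : R | -1 <= t <= 1]].

(* Main.v *)
Require Import Defs.
From HB Require Import structures.
From mathcomp Require Import all_boot all_order all_algebra.
From mathcomp Require Import all_classical all_reals.
From mathcomp Require Import ring lra zify.
Import Order.TTheory GRing.Theory Num.Theory.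
Local Open Scope ring_scope.

Section S.
Variable R : realType.
Implicit Types p q : {poly R}.

Lemma coefmax_ge0 p : 0 <= coefmax p.
Proof.
rewrite /coefmax; elim/big_ind: _ => //= x y hx hy.
by rewrite le_max hx.
Qed.

Lemma coef_le_coefmax p i : `|p`_i| <= coefmax p.
Proof.
case: (ltnP i (size p)) => hi; last first.
  by rewrite nth_default // normr0 coefmax_ge0.
rewrite /coefmax (bigD1 (Ordinal hi)) //= le_max lexx //.
Qed.

Lemma coefmax_le p B : 0 <= B -> (forall i, `|p`_i| <= B) -> coefmax p <= B.
Proof.
move=> hB h; rewrite /coefmax; elim/big_ind: _ => //= x y hx hy.
by rewrite ge_max hx.
Qed.

Lemma sum_abs_coef p n :
  \sum_(i < n) `|p`_i| <= (minn n (size p))%:R * coefmax p.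
Proof.
elim: n => [|n IH]; first by rewrite big_ord0 min0n mul0r.
rewrite big_ord_recr /=.
case: (ltnP n (size p)) => hn.
  have -> : minn n.+1 (size p) = (minn n (size p)).+1 by lia.
  rewrite -addn1 natrD mulrDl mul1r; apply: lerD => //.
  exact: coef_le_coefmax.
have -> : minn n.+1 (size p) = minn n (size p) by lia.
by rewrite nth_default // normr0 addr0.
Qed.

Lemma coefM_bound (m : nat) p q j : (size p <= m.+1)%N ->
  `|(p * q)`_j| <= m.+1%:R * coefmax p * coefmax q.
Proof.
move=> hp; rewrite coefM.
apply: le_trans (ler_norm_sum _ _ _) _.
apply: (@le_trans _ _ (\sum_(i < j.+1) `|p`_i| * coefmax q)).
  apply: ler_sum => i _; rewrite normrM; apply: ler_wpM2l => //.
  exact: coef_le_coefmax.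
rewrite -mulr_suml; apply: ler_wpM2r; first exact: coefmax_ge0.
apply: le_trans (sum_abs_coef _ _) _; apply: ler_wpM2r; first exact: coefmax_ge0.
rewrite ler_nat; lia.
Qed.

Lemma horner_bound p t : -1 <= t <= 1 -> `|p.[t]| <= \sum_(i < size p) `|p`_i|.
Proof.
move=> ht; rewrite horner_coef; apply: le_trans (ler_norm_sum _ _ _) _.
apply: ler_sum => i _; rewrite normrM normrX.
rewrite -[X in _ <= X]mulr1; apply: ler_wpM2l => //.
apply: exprn_ile1 => //; rewrite ler_norml; lra.
Qed.

Lemma supnorm_ge p t : -1 <= t <= 1 -> `|p.[t]| <= supnorm p.
Proof.
move=> ht; rewrite /supnorm; apply: ub_le_sup; last by exists t.
exists (\sum_(i < size p) `|p`_i|) => _ [s hs <-]; exact: horner_bound.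
Qed.

Lemma supnorm_le p B : (forall t, -1 <= t <= 1 -> `|p.[t]| <= B) -> supnorm p <= B.
Proof.
move=> h; rewrite /supnorm; apply: ge_sup.
  by exists `|p.[0]|, 0 => //=; lra.
by move=> _ [s hs <-]; apply: h.
Qed.
End S.
Theorem lemma1p13 (R : realType) (m k : nat) (beta : R) :
  0 < beta ->
  (forall h : {poly R}, (size h <= m.+1)%N -> coefmax h <= beta * supnorm h) ->
  forall (f g : 'I_k -> {poly R}),
  (forall i, (size (f i) <= m.+1)%N) ->
  (forall i, (size (g i) <= m.+1)%N) ->
  forall eps : R, 0 <= eps ->
  (forall i, coefmax (g i - f i) <= eps) ->
  coefmax ((\sum_(i < k) g i ^+ 2) - (\sum_(i < k) f i ^+ 2))
    <= m.+1%:R * k%:R * eps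
       * (eps + 2 * beta * Num.sqrt (supnorm (\sum_(i < k) f i ^+ 2))).
Proof.
move=> hb hbeta f g hf hg eps he hd.
set S := supnorm _.
have hS0 : 0 <= Num.sqrt S by apply: sqrtr_ge0.
have hfi : forall i, supnorm (f i) <= Num.sqrt S.
  move=> i; apply: supnorm_le => t ht.
  have hF : (f i).[t] ^+ 2 <= (\sum_(j < k) f j ^+ 2).[t].
    rewrite horner_sum (bigD1 i) //= horner_exp lerDl.
    by apply: sumr_ge0 => j _; rewrite horner_exp sqr_ge0.
  have hF2 : (\sum_(j < k) f j ^+ 2).[t] <= S.
    apply: le_trans (@supnorm_ge _ _ _ ht); exact: ler_norm.
  rewrite -sqrtr_sqr; apply: ler_wsqrtr; apply: le_trans hF hF2.
have hcf : forall i, coefmax (f i) <= beta * Num.sqrt S.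
  move=> i; apply: le_trans (hbeta _ (hf i)) _; apply: ler_wpM2l; first lra.
  exact: hfi.
set T := m.+1%:R * eps * (eps + 2 * beta * Num.sqrt S).
have hT : 0 <= T.
  rewrite /T; apply: mulr_ge0; first by apply: mulr_ge0.
  by apply: addr_ge0 => //; apply: mulr_ge0 => //; apply: mulr_ge0; lra.
have key : forall i j, `|(g i ^+ 2 - f i ^+ 2)`_j| <= T.
  move=> i j.
  have hsd : (size (g i - f i)%R <= m.+1)%N.
    apply: leq_trans (size_add _ _) _; rewrite size_opp geq_max hf hg //.
  have -> : g i ^+ 2 - f i ^+ 2 = (g i - f i) * (g i - f i) + ((g i - f i) * f i) *+ 2.
    by ring.
  rewrite coefD coefMn.
  apply: le_trans (ler_normD _ _) _.
  rewrite normrMn.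
  have h1 := @coefM_bound _ m (g i - f i) (g i - f i) j hsd.
  have h2 := @coefM_bound _ m (g i - f i) (f i) j hsd.
  have c1 := @coefmax_ge0 _ (g i - f i).
  have c2 := @coefmax_ge0 _ (f i).
  have e1 : m.+1%:R * coefmax (g i - f i) * coefmax (g i - f i) <= m.+1%:R * eps * eps.
    apply: ler_pM => //; first by apply: mulr_ge0.
    by apply: ler_wpM2l.
  have e2 : m.+1%:R * coefmax (g i - f i) * coefmax (f i) <= m.+1%:R * eps * (beta * Num.sqrt S).
    apply: ler_pM => //; first by apply: mulr_ge0.
    by apply: ler_wpM2l.
  have -> : T = m.+1%:R * eps * eps + (m.+1%:R * eps * (beta * Num.sqrt S)) *+ 2.
    by rewrite /T; ring.
  apply: lerD; first exact: le_trans h1 e1.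
  by apply: ler_wMn2r; apply: le_trans h2 e2.
apply: coefmax_le.
  have hX : 0 <= eps + 2 * beta * Num.sqrt S.
    by apply: addr_ge0 => //; apply: mulr_ge0 => //; apply: mulr_ge0; lra.
  by rewrite !mulr_ge0.
move=> j.
rewrite -sumrB coef_sum.
apply: le_trans; first exact: ler_norm_sum.
apply: le_trans; first exact: (ler_sum _ (fun i _ => key i j)).
rewrite sumr_const card_ord -mulr_natl /T; rewrite le_eqVlt; apply/orP; left; apply/eqP; ring.
Qed.
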